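(* Suppose that $M=1$ (so $N=p$), that $\theta=\omega^2$, and that $H$ is a space of level $N$ cuspidal-at-zero modular symbols having a $T_2$-operator. If $T_2$ acts on $H^{\omega^2}$ as multiplication by $1+2\omega^{-2}(2)$, then $H^{\omega^2}=C^{\omega^2}$.
   Context: $p$ is an odd prime, $N=p$, $\Delta=(\mathbb{Z}/N\mathbb{Z})^\times/\langle-1\rangle$, $\langle a\rangle\in\mathbb{Z}_p[\Delta]$ the group element of $a$. A space of level $N$ cuspidal-at-zero modular symbols is a $\mathbb{Z}_p[\Delta]$-module $H$ spanned by symbols $[u:v]$ for nonzero $u,v\in\mathbb{Z}/N\mathbb{Z}$ generating the unit ideal, satisfying $[u:v]=[-u:-v]=-[-v:u]$, $[u:v]=[u:u+v]+[u+v:v]$ whenever $u\neq-v$, and $\langle a\rangle[u:v]=[au:av]$. A $T_2$-operator (for $N$ odd) is a $\mathbb{Z}_p[\Delta]$-linear endomorphism $T_2$ of $H$ with $\langle2\rangle T_2[u:v]=[2u:v]+[2u:u+v]+[u+v:2v]+[u:2v]$ for all $u,v$ with $(u,v)=(1)$ and $u$, $v$, $u+v$ nonzero. For integers $c,d>1$ prime to $6N$, ${}_{c,d}[u:v]=c^2d^2[u:v]-c^2[u:dv]-d^2[cu:v]+[cu:dv]$, and $C$ is the $\mathbb{Z}_p$-span of all such symbols with $u,v\neq0$. $\omega$ is the Teichmüller character of $(\mathbb{Z}/p\mathbb{Z})^\times$, $\mathcal{O}=\mathbb{Z}_p[\mu_{\varphi(N)}]$, $e_{\omega^2}=\frac1{\varphi(N)}\sum_a\omega^{-2}(a)\langle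 a\rangle$, and $D^{\omega^2}=e_{\omega^2}(D\otimes_{\mathbb{Z}_p}\mathcal{O})$. *)

(* Defs.v *)
From HB Require Import structures.
From mathcomp Require Import all_boot all_order all_algebra.
From mathcomp Require Import boolp classical_sets.
Set Implicit Arguments. Unset Strict Implicit. Unset Printing Implicit Defensive.
Import GRing.Theory Num.Theory.
Local Open Scope ring_scope.

Lemma modz_dvdm_ (m d k : int) : modz (modz m (d * k)) d = modz m d.
Proof.
have E := @divz_eq m (d * k).
by rewrite [in RHS]E (mulrC d k) mulrA modzMDl.
Qed.

Definition pbase (p : nat) : nat := (p.-2).+2.
Definition pmod (p n : nat) : int := ((pbase p)%:Z) ^+ n.

Record padic (p : nat) := Padic {
  pval : nat -> int;
  pvalP : forall n, pval n = modz (pval n.+1) (pmod p n) }.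

HB.instance Definition _ p := gen_eqMixin (padic p).
HB.instance Definition _ p := gen_choiceMixin (padic p).

Section PadicRing.
Variable p : nat.
Local Notation q := (pmod p).

Lemma padic_eq (x y : padic p) : pval x =1 pval y -> x = y.
Proof.
case: x y => [f fP] [g gP] /= fg.
have efg : f = g by apply: funext.
subst g; congr Padic; exact: Prop_irrelevance.
Qed.

Lemma pmodS n : q n.+1 = q n * (pbase p)%:Z.
Proof. by rewrite /pmod exprSr. Qed.

Lemma pval_mod (x : padic p) n : modz (pval x n) (q n) = pval x n.
Proof. by rewrite [in RHS]pvalP [in LHS]pvalP modz_mod. Qed.

Definition lift_op (F : int -> int -> int)
  (HF : forall a b d, modz (F (modz a d) (modz b d)) d = modz (F a b) d)
  (x y : padic p) : padic p.
Proof.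
refine (@Padic p (fun n => modz (F (pval x n) (pval y n)) (q n)) _).
by move=> n; rewrite pmodS modz_dvdm_ -[RHS]HF -!pvalP.
Defined.

Lemma HFadd a b d : modz (modz a d + modz b d) d = modz (a + b) d.
Proof. by rewrite modzDml modzDmr. Qed.
Lemma HFmul a b d : modz (modz a d * modz b d) d = modz (a * b) d.
Proof. by rewrite modzMml modzMmr. Qed.
Lemma HFopp a (b : int) d : modz (- modz a d) d = modz (- a) d.
Proof. by rewrite -mulN1r modzMmr mulN1r. Qed.

Definition padd := @lift_op (fun a b => a + b) HFadd.
Definition pmul := @lift_op (fun a b => a * b) HFmul.
Definition popp (x : padic p) := @lift_op (fun a b => - a) (fun a b d => HFopp a b d) x x.
Definition pzero : padic p := @Padic p (fun _ => 0) (fun n => esym (mod0z _)).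
Definition pone : padic p.
Proof.
refine (@Padic p (fun n => modz 1 (q n)) _).
by move=> n; rewrite pmodS modz_dvdm_.
Defined.

Lemma paddA : associative padd.
Proof. by move=> x y z; apply: padic_eq => n /=; rewrite modzDml modzDmr addrA. Qed.
Lemma paddC : commutative padd.
Proof. by move=> x y; apply: padic_eq => n /=; rewrite addrC. Qed.
Lemma padd0 : left_id pzero padd.
Proof. by move=> x; apply: padic_eq => n /=; rewrite add0r pval_mod. Qed.
Lemma paddN : left_inverse pzero popp padd.
Proof. by move=> x; apply: padic_eq => n /=; rewrite modzDml addNr mod0z. Qed.

HB.instance Definition _ := GRing.isZmodule.Build (padic p) paddA paddC padd0 paddN.

Lemma pmulA : associative pmul.
Proof. by move=> x y z; apply: padic_eq => n /=; rewrite modzMml modzMmr mulrA. Qed.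
Lemma pmulC : commutative pmul.
Proof. by move=> x y; apply: padic_eq => n /=; rewrite mulrC. Qed.
Lemma pmul1 : left_id pone pmul.
Proof. by move=> x; apply: padic_eq => n /=; rewrite modzMml mul1r pval_mod. Qed.
Lemma pmulDl : left_distributive pmul padd.
Proof.
by move=> x y z; apply: padic_eq => n /=; rewrite modzMml modzDml modzDmr mulrDl.
Qed.
Lemma pone_neq0 : pone != pzero.
Proof.
apply/eqP => /(congr1 (fun x => pval x 1)) /=.
rewrite /pmod expr1 modz_small //.
Qed.

HB.instance Definition _ := GRing.Zmodule_isComNzRing.Build (padic p) pmulA pmulC pmul1 pmulDl pone_neq0.
End PadicRing.


(* The ring Z_p of p-adic integers is [padic p] (for p prime, pbase p = p): *)
(* compatible sequences (x_n) with x_n in [0, p^n) and x_{n+1} = x_n mod p^n. *)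
(* Z/NZ with N = p prime is 'F_p.                                            *)

(* 1/phi(N) = 1/(p-1) in Z_p: the element w with w * (p-1) = 1. *)
Definition padic_inv (p : nat) (z : padic p) : padic p :=
  xget 0 [set w | w * z = 1].

Definition teich (p : nat) (a : 'F_p) : padic p :=
  xget 0 [set z : padic p | z ^+ p.-1 = 1 /\ pval z 1 = (nat_of_ord a)%:Z].

(* The character omega^{-2} : a |-> omega(a)^{-2} = omega(a^{-1})^2. *)
Definition omega_m2 (p : nat) (a : 'F_p) : padic p := teich (a^-1) ^+ 2.

(* Space of level N = p cuspidal-at-zero modular symbols: a Z_p-module H   *)
(* with a Z_p-linear action act of Delta = (Z/pZ)^x/<-1> (act a = <a>) and   *)
(* symbols sym u v = [u:v] (u, v nonzero in Z/pZ, which for N = p prime is  *)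
(* the same as (u,v) = (1)) spanning H and satisfying the relations.        *)
Definition cusp_modsym (p : nat) (H : lmodType (padic p))
  (act : 'F_p -> H -> H) (sym : 'F_p -> 'F_p -> H) : Prop :=
      (forall a : 'F_p, a != 0 -> forall (c : padic p) (x y : H),
          act a (c *: x + y) = c *: act a x + act a y) /\
      (forall x, act 1 x = x) /\
      (forall a b : 'F_p, a != 0 -> b != 0 -> forall x,
          act (a * b) x = act a (act b x)) /\
      (forall x, act (-1) x = x) /\
      (forall x : H, exists c : {ffun 'F_p * 'F_p -> padic p},
          x = \sum_(uv : 'F_p * 'F_p | (uv.1 != 0) && (uv.2 != 0))
                c uv *: sym uv.1 uv.2) /\
      (forall u v : 'F_p, u != 0 -> v != 0 ->
          sym u v = sym (- u) (- v) /\ sym u v = - sym (- v) u) /\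
      (forall u v : 'F_p, u != 0 -> v != 0 -> u != - v ->
          sym u v = sym u (u + v) + sym (u + v) v) /\
      (forall a u v : 'F_p, a != 0 -> u != 0 -> v != 0 ->
          act a (sym u v) = sym (a * u) (a * v)).

Definition T2_operator (p : nat) (H : lmodType (padic p))
  (act : 'F_p -> H -> H) (sym : 'F_p -> 'F_p -> H) (T2 : H -> H) : Prop :=
  [/\ (forall (c : padic p) (x y : H), T2 (c *: x + y) = c *: T2 x + T2 y),
      (forall a : 'F_p, a != 0 -> forall x, T2 (act a x) = act a (T2 x)) &
      (forall u v : 'F_p, u != 0 -> v != 0 -> u + v != 0 ->
          act 2 (T2 (sym u v)) =
            sym (2 * u) v + sym (2 * u) (u + v) + sym (u + v) (2 * v)
            + sym u (2 * v))].

Definition cd_sym (p : nat) (H : lmodType (padic p))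
  (sym : 'F_p -> 'F_p -> H) (c d : nat) (u v : 'F_p) : H :=
  (c ^ 2 * d ^ 2)%:R *: sym u v - (c ^ 2)%:R *: sym u (d%:R * v)
  - (d ^ 2)%:R *: sym (c%:R * u) v + sym (c%:R * u) (d%:R * v).

Definition in_C (p : nat) (H : lmodType (padic p))
  (sym : 'F_p -> 'F_p -> H) (x : H) : Prop :=
  exists (n : nat) (k : 'I_n -> padic p) (cs ds : 'I_n -> nat)
         (us vs : 'I_n -> 'F_p),
    (forall i, [/\ (1 < cs i)%N, (1 < ds i)%N, coprime (cs i) (6 * p),
                   coprime (ds i) (6 * p) & (us i != 0) && (vs i != 0)]) /\
    x = \sum_(i < n) k i *: cd_sym sym (cs i) (ds i) (us i) (vs i).

Definition e_om2 (p : nat) (H : lmodType (padic p))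
  (act : 'F_p -> H -> H) (x : H) : H :=
  padic_inv (p.-1)%:R *: \sum_(a : 'F_p | a != 0) omega_m2 a *: act a x.

(* Main.v *)
Require Import Defs.
From HB Require Import structures.
From mathcomp Require Import all_boot all_order all_algebra all_field.
From mathcomp Require Import boolp classical_sets.
From mathcomp Require Import zify ring lra.
Import Order.TTheory GRing.Theory Num.Theory.
Local Open Scope ring_scope.
Set Implicit Arguments. Unset Strict Implicit. Unset Printing Implicit Defensive.

Section Padic.
Variable p : nat.
Hypothesis pP : prime p.
Local Notation P := (padic p).

Lemma pbaseE : pbase p = p.
Proof. rewrite /pbase; have := prime_gt1 pP; case: p => [|[|n]] //. Qed.

Lemma pmodE n : pmod p n = (p%:Z) ^+ n.
Proof. by rewrite /pmod pbaseE. Qed.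

Lemma pvalD (x y : P) n : pval (x + y) n = ((pval x n + pval y n) %% pmod p n)%Z.
Proof. by []. Qed.
Lemma pvalM (x y : P) n : pval (x * y) n = ((pval x n * pval y n) %% pmod p n)%Z.
Proof. by []. Qed.
Lemma pvalN (x : P) n : pval (- x) n = ((- pval x n) %% pmod p n)%Z.
Proof. by []. Qed.
Lemma pval1 n : pval (1 : P) n = (1 %% pmod p n)%Z.
Proof. by []. Qed.
Lemma pval0 n : pval (0 : P) n = 0.
Proof. by []. Qed.

Lemma pmod_gt0 n : 0 < pmod p n.
Proof. rewrite pmodE exprn_gt0 // ltz_nat prime_gt0 //. Qed.

Lemma pval_natr (m : nat) n : pval (m%:R : P) n = (m%:Z %% pmod p n)%Z.
Proof.
elim: m => [|m IH]; first by rewrite pval0 mod0z.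
by rewrite -natr1 pvalD IH pval1 modzDml modzDmr -[in RHS]addn1 PoszD.
Qed.

Lemma pvalX (x : P) k n : pval (x ^+ k) n = ((pval x n ^+ k) %% pmod p n)%Z.
Proof.
elim: k => [|k IH]; first by rewrite !expr0 pval1.
by rewrite !exprS pvalM IH modzMmr.
Qed.

Lemma pval_modm (x : P) m n : (m <= n)%N -> pval x m = (pval x n %% pmod p m)%Z.
Proof.
move=> /subnK <-; elim: (n - m)%N => [|k IH]; first by rewrite add0n pval_mod.
rewrite IH addSn (pvalP x (k + m)) !pmodE exprD mulrC modz_dvdm_ //.
Qed.

Lemma pval_ge0 (x : P) n : 0 <= pval x n.
Proof. by rewrite -pval_mod modz_ge0 // gt_eqF // pmod_gt0. Qed.
Lemma pval_lt (x : P) n : pval x n < pmod p n.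
Proof. by rewrite -pval_mod ltz_pmod // pmod_gt0. Qed.

Lemma Fp_intr_eq0 (a : int) : ((a%:~R : 'F_p) == 0) = (p%:Z %| a)%Z.
Proof.
case: a => n.
  rewrite dvdzE /= -(val_eqE (n%:R : 'F_p) 0) /= (val_Fp_nat pP).
  by [].
rewrite dvdzE NegzE abszN mulrNz oppr_eq0 /=.
rewrite -(val_eqE ((n.+1)%:R : 'F_p) 0) /= (val_Fp_nat pP).
by [].
Qed.

Lemma Fp_intr_eq (a b : int) : ((a%:~R : 'F_p) == b%:~R) = (a == b %[mod p])%Z.
Proof. by rewrite -subr_eq0 -intrB Fp_intr_eq0 eqz_mod_dvd. Qed.

Lemma Fp_modz (a : int) : (((a %% p)%Z)%:~R : 'F_p) = a%:~R.
Proof.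
by apply/eqP; rewrite Fp_intr_eq modz_mod.
Qed.

Definition red (x : P) : 'F_p := (pval x 1)%:~R.

Lemma pmod1 : pmod p 1 = p%:Z.
Proof. by rewrite pmodE expr1. Qed.

Lemma redD x y : red (x + y) = red x + red y.
Proof. by rewrite /red pvalD pmod1 Fp_modz intrD. Qed.
Lemma redM x y : red (x * y) = red x * red y.
Proof. by rewrite /red pvalM pmod1 Fp_modz intrM. Qed.
Lemma redN x : red (- x) = - red x.
Proof. by rewrite /red pvalN pmod1 Fp_modz mulrNz. Qed.
Lemma red1 : red 1 = 1.
Proof. by rewrite /red pval1 pmod1 Fp_modz. Qed.
Lemma red0 : red 0 = 0.
Proof. by rewrite /red pval0. Qed.
Lemma red_natr m : red (m%:R) = m%:R.
Proof. by rewrite /red pval_natr pmod1 Fp_modz. Qed.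
Lemma redX x k : red (x ^+ k) = red x ^+ k.
Proof. by rewrite /red pvalX pmod1 Fp_modz rmorphXn. Qed.
Lemma redB x y : red (x - y) = red x - red y.
Proof. by rewrite redD redN. Qed.
Lemma red_sum (I : Type) (r : seq I) (Q : pred I) (F : I -> P) :
  red (\sum_(i <- r | Q i) F i) = \sum_(i <- r | Q i) red (F i).
Proof. exact: (big_morph red redD red0). Qed.

Lemma red_eq0 x : red x = 0 -> pval x 1 = 0.
Proof.
move=> /eqP; rewrite /red Fp_intr_eq0 => /dvdz_mod0P.
by rewrite -pmod1 pval_mod.
Qed.

Lemma pmodS' n : pmod p n.+1 = pmod p n * p%:Z.
Proof. by rewrite !pmodE exprSr. Qed.

Lemma pdiv_red (z : P) : red z = 0 -> exists z' : P, z = p%:R * z'.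
Proof.
move=> /red_eq0 z1.
have hd n : (p%:Z %| pval z n.+1)%Z.
  apply/dvdz_mod0P; by rewrite -pmod1 -pval_modm.
pose b n := (pval z n.+1 %/ p)%Z.
have Eb n : pval z n.+1 = b n * p by rewrite divzK.
have pn0 : (p%:Z) != 0 by rewrite eqz_nat -lt0n prime_gt0.
have pp0 : (0 < p%:Z) by rewrite ltz_nat prime_gt0.
have bP n : b n = (b n.+1 %% pmod p n)%Z.
  apply: (mulIf pn0).
  by rewrite -Eb mulz_modl // -Eb -pmodS' -pvalP.
exists (Padic bP); apply: padic_eq => n.
rewrite pvalM /= pval_natr modzMml mulrC -Eb.
by rewrite -pvalP.
Qed.

Lemma punit (z : P) : red z != 0 -> exists w : P, w * z = 1.
Proof.
move=> rz.
have cop n : coprimez (pval z n) (pmod p n).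
  case: n => [|n]; first by rewrite pmodE expr0 /coprimez gcdz1.
  rewrite pmodE; apply: coprimezXr.
  rewrite coprimez_sym coprimezE /= prime_coprime //.
  apply: contra rz => hd.
  have : (p%:Z %| pval z n.+1)%Z by rewrite dvdzE.
  move=> /dvdz_mod0P; rewrite -pmod1 -pval_modm // => h.
  by rewrite /red h.
pose u n := projT1 (Bezoutz (pval z n) (pmod p n)).
have Bu n : exists v, u n * pval z n + v * pmod p n = 1.
  rewrite /u; case: (Bezoutz _ _) => uu [v hv] /=; exists v.
  by rewrite hv; apply/eqP; exact: cop.
have uP n : (u n %% pmod p n)%Z = (((u n.+1 %% pmod p n.+1)%Z %% pmod p n))%Z.
  rewrite pmodS' modz_dvdm_; apply/eqP; rewrite eqz_mod_dvd; apply/dvdzP.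
  have [v0 B0] := Bu n; have [v1 B1] := Bu n.+1.
  have Ea := divz_eq (pval z n.+1) (pmod p n).
  rewrite -(pvalP z n) in Ea.
  set a0 := pval z n in B0 Ea *; set a1 := pval z n.+1 in B1 Ea *.
  set d := (a1 %/ pmod p n)%Z in Ea.
  set q := pmod p n in B0 Ea *.
  rewrite pmodS' -/q in B1.
  set uA := u n in B0 *; set uB := u n.+1 in B1 *.
  exists (uA * v1 * p + uA * uB * d - uB * v0).
  have h0 : 1 - uA * a0 = v0 * q by rewrite -B0; ring.
  have h1 : 1 - uB * a0 = v1 * q * p + uB * d * q.
    by rewrite -B1 Ea; ring.
  have -> : uA - uB = uA * (1 - uB * a0) - uB * (1 - uA * a0) by ring.
  rewrite h0 h1; ring.
pose w n := (u n %% pmod p n)%Z.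
have wP n : w n = (w n.+1 %% pmod p n)%Z by rewrite /w -uP.
exists (Padic wP); apply: padic_eq => n.
rewrite pvalM /= /w modzMml.
have [v B] := Bu n.
have -> : u n * pval z n = (- v) * pmod p n + 1 by rewrite -B; ring.
by rewrite modzMDl.
Qed.
Lemma Fp_fermat (a : 'F_p) : a ^+ p = a.
Proof. by have := expf_card a; rewrite (card_Fp pP). Qed.

Lemma Fp_fermat1 (a : 'F_p) : a != 0 -> a ^+ p.-1 = 1.
Proof.
move=> a0; apply: (mulfI a0); rewrite mulr1 -exprS prednK ?prime_gt0 //.
exact: Fp_fermat.
Qed.

Lemma lift_pow (x y : int) k :
  (x == y %[mod p])%Z -> (x ^+ (p ^ k) == y ^+ (p ^ k) %[mod (p%:Z) ^+ k.+1])%Z.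
Proof.
move=> xy; elim: k => [|k IH]; first by rewrite !expn0 !expr1.
rewrite expnSr !exprM; move: IH.
set X := x ^+ (p ^ k); set Y := y ^+ (p ^ k) => IH; clearbody X Y.
rewrite eqz_mod_dvd subrXX exprSr; apply: dvdz_mul; first by rewrite -eqz_mod_dvd.
rewrite -Fp_intr_eq0.
have XY : (X%:~R : 'F_p) = Y%:~R.
  apply/eqP; rewrite Fp_intr_eq.
  move: IH; rewrite exprS => /eqP IH.
  by apply/eqP; rewrite -(modz_dvdm_ X p (p%:Z ^+ k)) IH modz_dvdm_.
rewrite (big_morph (intr : int -> 'F_p) (@intrD _) (mulr0z 1)).
rewrite (eq_bigr (fun _ => (Y%:~R : 'F_p) ^+ p.-1)); last first.
  move=> i _; rewrite intrM !rmorphXn /= XY -exprD.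
  by rewrite subnK // -ltnS prednK ?prime_gt0.
by rewrite sumr_const card_ord -mulr_natr (pchar_Fp_0 pP) mulr0.
Qed.

Lemma natr_Fp (a : 'F_p) : ((nat_of_ord a)%:Z%:~R : 'F_p) = a.
Proof. exact: natr_Zp. Qed.

Lemma ord_Fp_lt (a : 'F_p) : (nat_of_ord a < p)%N.
Proof. by have := ltn_ord a; rewrite [X in (_ < X)%N -> _](Fp_cast pP). Qed.

Lemma teich_exists (a : 'F_p) : a != 0 ->
  exists z : P, z ^+ p.-1 = 1 /\ pval z 1 = (nat_of_ord a)%:Z.
Proof.
move=> a0.
set A := (nat_of_ord a)%:Z.
have ferm : (A ^+ p == A %[mod p])%Z.
  by rewrite -Fp_intr_eq rmorphXn /= natr_Fp Fp_fermat.
have ferm1 : (A ^+ p.-1 == 1 %[mod p])%Z.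
  by rewrite -Fp_intr_eq rmorphXn /= natr_Fp Fp_fermat1.
pose t n := ((A ^+ (p ^ n.-1)) %% pmod p n)%Z.
have tP n : t n = (t n.+1 %% pmod p n)%Z.
  rewrite /t pmodS' modz_dvdm_.
  case: n => [|k]; first by rewrite pmodE expr0 !modz1.
  apply/eqP; rewrite pmodE; move: (lift_pow k ferm).
  by rewrite /= -exprM -expnS eq_sym.
exists (Padic tP); split.
  apply: padic_eq => n; rewrite pvalX /= modzXm.
  case: n => [|k]; first by rewrite pmodE expr0 !modz1.
  rewrite /= -exprM mulnC exprM pmodE; apply/eqP.
  by move: (lift_pow k ferm1); rewrite expr1n.
rewrite /t /= expn0 expr1 pmod1 modz_small //.
by rewrite /A ltz_nat ord_Fp_lt andbT.
Qed.

Lemma teich_spec (a : 'F_p) : a != 0 ->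
  teich a ^+ p.-1 = 1 /\ pval (teich a) 1 = (nat_of_ord a)%:Z.
Proof. by move=> a0; exact: (xgetPex 0 (teich_exists a0)). Qed.

Lemma red_teich (a : 'F_p) : a != 0 -> red (teich a) = a.
Proof. by move=> a0; rewrite /red (teich_spec a0).2 natr_Fp. Qed.

Lemma red_unit_pow (z : P) : z ^+ p.-1 = 1 -> red z != 0.
Proof.
move=> h; apply/negP => /eqP r0.
have := congr1 red h; rewrite redX r0 red1 expr0n.
have -> : (p.-1 == 0)%N = false by have := prime_gt1 pP; case: p => [|[|]].
by move=> /eqP; rewrite eq_sym oner_eq0.
Qed.

Lemma teich_uniq (z w : P) : z ^+ p.-1 = 1 -> w ^+ p.-1 = 1 -> red z = red w -> z = w.
Proof.
move=> hz hw rzw.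
pose S := \sum_(i < p.-1) z ^+ (p.-1.-1 - i) * w ^+ i.
have E : (z - w) * S = 0 by rewrite -subrXX hz hw subrr.
have rS : red S != 0.
  rewrite /S red_sum (eq_bigr (fun _ => red w ^+ p.-2)); last first.
    move=> i _; rewrite redM !redX rzw -exprD subnK //.
    by have := ltn_ord i; lia.
  rewrite sumr_const card_ord -mulr_natr mulf_neq0 //.
    by rewrite expf_neq0 // red_unit_pow.
  apply/eqP => h; have := congr1 (fun x : 'F_p => nat_of_ord x) h; rewrite /= (val_Fp_nat pP) modn_small /=.
    by have := prime_gt1 pP; lia.
  by have := prime_gt1 pP; lia.
have [w' hw'] := punit rS.
apply/eqP; rewrite -subr_eq0; apply/eqP.
have : (z - w) * S * w' = 0 by rewrite E mul0r.
by rewrite -mulrA (mulrC S) hw' mulr1 => ->.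
Qed.

Lemma teichM (a b : 'F_p) : a != 0 -> b != 0 -> teich (a * b) = teich a * teich b.
Proof.
move=> a0 b0.
have ab0 : a * b != 0 by rewrite mulf_neq0.
apply: teich_uniq; first by case: (teich_spec ab0).
  by rewrite exprMn (teich_spec a0).1 (teich_spec b0).1 mulr1.
by rewrite redM !red_teich.
Qed.

Lemma teich1 : teich (1 : 'F_p) = 1.
Proof.
apply: teich_uniq; first by case: (teich_spec (oner_neq0 _)).
  by rewrite expr1n.
by rewrite red1 red_teich ?oner_neq0.
Qed.
End Padic.

Lemma cancel4 (V : zmodType) (a b c d : V) : a + b + c + d - a - b - c - d = 0.
Proof.
apply/eqP; rewrite !subr_eq add0r; apply/eqP.
by rewrite [RHS]addrC [d + c + b]addrC [d + c]addrC !addrA.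
Qed.

Section Main.
Variable p : nat.
Hypothesis pP : prime p.
Hypothesis p_odd : odd p.
Local Notation P := (padic p).
Variable H : lmodType P.
Variables (act : 'F_p -> H -> H) (sym : 'F_p -> 'F_p -> H).
Hypothesis actL : forall a : 'F_p, a != 0 -> forall (c : P) (x y : H),
  act a (c *: x + y) = c *: act a x + act a y.
Hypothesis actM : forall a b : 'F_p, a != 0 -> b != 0 -> forall x,
  act (a * b) x = act a (act b x).
Hypothesis symN : forall u v : 'F_p, u != 0 -> v != 0 ->
  sym u v = sym (- u) (- v) /\ sym u v = - sym (- v) u.
Hypothesis symact : forall a u v : 'F_p, a != 0 -> u != 0 -> v != 0 ->
  act a (sym u v) = sym (a * u) (a * v).

Local Notation e := (e_om2 act).
Definition theta (a : 'F_p) : P := teich a ^+ 2.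

Lemma e_lin (c : P) x y : e (c *: x + y) = c *: e x + e y.
Proof.
rewrite /e_om2 [in RHS]scalerA [in RHS]mulrC -[in RHS]scalerA -scalerDr.
congr (_ *: _).
rewrite scaler_sumr -big_split /=; apply: eq_bigr => a a0.
by rewrite actL // scalerDr !scalerA mulrC.
Qed.

Lemma e0 : e 0 = 0.
Proof.
have h := e_lin 1 0 0; rewrite !scale1r addr0 in h.
by apply: (@addrI _ (e 0)); rewrite addr0 -h.
Qed.
Lemma eD x y : e (x + y) = e x + e y.
Proof. by have := e_lin 1 x y; rewrite !scale1r. Qed.
Lemma eZ (c : P) x : e (c *: x) = c *: e x.
Proof. by rewrite -[c *: x]addr0 e_lin e0 addr0. Qed.
Lemma eN x : e (- x) = - e x.
Proof. by rewrite -scaleN1r eZ scaleN1r. Qed.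
Lemma eB x y : e (x - y) = e x - e y.
Proof. by rewrite eD eN. Qed.
Lemma e_sum (I : Type) (r : seq I) (Q : pred I) (F : I -> H) :
  e (\sum_(i <- r | Q i) F i) = \sum_(i <- r | Q i) e (F i).
Proof. exact: (big_morph e eD e0). Qed.

Lemma thetaM a b : a != 0 -> b != 0 -> theta (a * b) = theta a * theta b.
Proof. by move=> a0 b0; rewrite /theta teichM // exprMn. Qed.
Lemma theta1 : theta 1 = 1.
Proof. by rewrite /theta teich1 // expr1n. Qed.
Lemma red_theta a : a != 0 -> red (theta a) = a ^+ 2.
Proof. by move=> a0; rewrite /theta (redX pP) (red_teich pP). Qed.
Lemma thetaV a : a != 0 -> theta a * theta a^-1 = 1.
Proof. by move=> a0; rewrite -thetaM ?invr_eq0 // divff // theta1. Qed.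

Lemma e_act (b : 'F_p) x : b != 0 -> e (act b x) = theta b *: e x.
Proof.
move=> b0; rewrite /e_om2 [in RHS]scalerA [in RHS]mulrC -[in RHS]scalerA.
congr (_ *: _).
rewrite scaler_sumr.
have -> : \sum_(a | a != 0) omega_m2 a *: act a (act b x) =
          \sum_(a | a != 0) omega_m2 a *: act (a * b) x.
  by apply: eq_bigr => a a0; rewrite actM.
rewrite [RHS](reindex_inj (mulIf b0)) /=.
apply: eq_big => [a|a a0]; first by rewrite mulf_eq0 (negbTE b0) orbF.
rewrite scalerA; congr (_ *: _).
rewrite /omega_m2 -/(theta _) -/(theta _) -/(theta _).
rewrite invfM thetaM ?invr_eq0 //; have h := thetaV b0.
by rewrite -[LHS]mulr1 -h; ring.
Qed.

Local Notation inC := (in_C sym).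

Lemma inC0 : inC 0.
Proof.
exists 0%N, (fun=> 0), (fun=> 0%N), (fun=> 0%N), (fun=> 0), (fun=> 0).
by split; [case | rewrite big_ord0].
Qed.

Lemma inCZ (c : P) x : inC x -> inC (c *: x).
Proof.
move=> [n [k [cs [ds [us [vs [hc ->]]]]]]].
exists n, (fun i => c * k i), cs, ds, us, vs; split => //.
by rewrite scaler_sumr; apply: eq_bigr => i _; rewrite scalerA.
Qed.

Lemma inCD x y : inC x -> inC y -> inC (x + y).
Proof.
move=> [n1 [k1 [cs1 [ds1 [us1 [vs1 [hc1 ->]]]]]]].
move=> [n2 [k2 [cs2 [ds2 [us2 [vs2 [hc2 ->]]]]]]].
pose sp T (f1 : 'I_n1 -> T) (f2 : 'I_n2 -> T) (i : 'I_(n1 + n2)) :=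
  match split i with inl j => f1 j | inr j => f2 j end.
exists (n1 + n2)%N, (sp _ k1 k2), (sp _ cs1 cs2), (sp _ ds1 ds2),
  (sp _ us1 us2), (sp _ vs1 vs2); split.
  by move=> i; rewrite /sp; case: (split i) => j.
rewrite big_split_ord /=; congr (_ + _); apply: eq_bigr => j _.
  by rewrite /sp (unsplitK (inl j : 'I_n1 + 'I_n2)).
by rewrite /sp (unsplitK (inr j : 'I_n1 + 'I_n2)).
Qed.

Lemma inC_sum (I : Type) (r : seq I) (Q : pred I) (F : I -> H) :
  (forall i, Q i -> inC (F i)) -> inC (\sum_(i <- r | Q i) F i).
Proof. move=> hF; apply: big_ind => //; [exact: inC0 | exact: inCD]. Qed.

Definition Nset (z : H) := exists c0 y0, inC c0 /\ z = e c0 + p%:R *: e y0.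

Lemma N0 : Nset 0.
Proof. by exists 0, 0; split; [exact: inC0 | rewrite e0 scaler0 addr0]. Qed.

Lemma ND x y : Nset x -> Nset y -> Nset (x + y).
Proof.
move=> [c1 [y1 [h1 ->]]] [c2 [y2 [h2 ->]]].
exists (c1 + c2), (y1 + y2); split; first exact: inCD.
by rewrite !eD scalerDr addrACA.
Qed.

Lemma NZs (c : P) x : Nset x -> Nset (c *: x).
Proof.
move=> [c1 [y1 [h1 ->]]]; exists (c *: c1), (c *: y1); split; first exact: inCZ.
by rewrite !eZ scalerDr; congr (_ + _); rewrite !scalerA (mulrC c).
Qed.

Lemma NN x : Nset x -> Nset (- x).
Proof. by move=> h; rewrite -scaleN1r; apply: NZs. Qed.

Lemma NB x y : Nset x -> Nset y -> Nset (x - y).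
Proof. by move=> hx hy; apply: ND => //; apply: NN. Qed.

Lemma N_sum (I : Type) (r : seq I) (Q : pred I) (F : I -> H) :
  (forall i, Q i -> Nset (F i)) -> Nset (\sum_(i <- r | Q i) F i).
Proof. move=> hF; apply: big_ind => //; [exact: N0 | exact: ND]. Qed.

Lemma N_inC c : inC c -> Nset (e c).
Proof. by move=> hc; exists c, 0; split => //; rewrite e0 scaler0 addr0. Qed.

Lemma N_red (s s' : P) y : red s = red s' -> Nset ((s - s') *: e y).
Proof.
move=> h; have [z hz] : exists z : P, s - s' = p%:R * z.
  by apply: (pdiv_red pP); rewrite (redB pP) h subrr.
exists 0, (z *: y); split; first exact: inC0.
by rewrite e0 add0r hz eZ -scalerA.
Qed.

Lemma N_unit (u : P) x : red u != 0 -> Nset (u *: x) -> Nset x.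
Proof.
move=> hu hx; have [w hw] := punit pP hu.
by rewrite -[x]scale1r -hw -scalerA; apply: NZs.
Qed.

Local Notation f t := (e (sym 1 t)).

Definition L (g : 'F_p -> P) : H := \sum_(t | t != 0) g t *: f t.

Lemma L_ext g h : (forall t, t != 0 -> g t = h t) -> L g = L h.
Proof. by move=> hg; apply: eq_bigr => t t0; rewrite hg. Qed.

Lemma L_add g h : L (fun t => g t + h t) = L g + L h.
Proof. by rewrite /L -big_split; apply: eq_bigr => t _; rewrite scalerDl. Qed.

Lemma L_scale c g : L (fun t => c * g t) = c *: L g.
Proof. by rewrite /L scaler_sumr; apply: eq_bigr => t _; rewrite scalerA. Qed.

Definition dP (s t : 'F_p) : P := if t == s then 1 else 0.

Lemma L_delta s : s != 0 -> L (dP s) = f s.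
Proof.
move=> s0; rewrite /L (bigD1 s) //= /dP eqxx scale1r big1 ?addr0 //.
by move=> t /andP [_ ts]; rewrite (negbTE ts) scale0r.
Qed.

Lemma L_e g : L g = e (\sum_(t | t != 0) g t *: sym 1 t).
Proof. by rewrite e_sum; apply: eq_bigr => t _; rewrite eZ. Qed.

Lemma L_transfer g h : Nset (L g) -> (forall t, t != 0 -> red (g t) = red (h t)) ->
  Nset (L h).
Proof.
move=> hg hr.
have -> : L h = L g + L (fun t => h t - g t).
  by rewrite -L_add; apply: L_ext => t _; rewrite addrC subrK.
apply: ND => //; apply: N_sum => t t0; apply: N_red; by rewrite hr.
Qed.

Definition NF (G : 'F_p -> 'F_p) :=
  exists g, Nset (L g) /\ forall t, t != 0 -> red (g t) = G t.

Definition lift (x : 'F_p) : P := (nat_of_ord x)%:R.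
Lemma red_lift x : red (lift x) = x.
Proof. by rewrite /lift (red_natr pP) natr_Zp. Qed.

Lemma NZ_add G G' : NF G -> NF G' -> NF (fun t => G t + G' t).
Proof.
move=> [g [hg rg]] [g' [hg' rg']]; exists (fun t => g t + g' t); split.
  by rewrite L_add; apply: ND.
by move=> t t0; rewrite (redD pP) rg ?rg'.
Qed.

Lemma NZ_scale c G : NF G -> NF (fun t => c * G t).
Proof.
move=> [g [hg rg]]; exists (fun t => lift c * g t); split.
  by rewrite L_scale; apply: NZs.
by move=> t t0; rewrite (redM pP) rg ?red_lift.
Qed.

Lemma NZ_ext G G' : (forall t, t != 0 -> G t = G' t) -> NF G -> NF G'.
Proof. by move=> hG [g [hg rg]]; exists g; split => // t t0; rewrite rg ?hG. Qed.

Lemma NZ_unit c G : c != 0 -> NF (fun t => c * G t) -> NF G.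
Proof.
move=> c0 h; have := NZ_scale c^-1 h; apply: NZ_ext => t _.
by rewrite mulrA mulVf // mul1r.
Qed.

Definition dF (s t : 'F_p) : 'F_p := if t == s then 1 else 0.

Lemma NZ_delta s : s != 0 -> NF (dF s) -> Nset (f s).
Proof.
move=> s0 [g [hg rg]]; rewrite -L_delta //; apply: (L_transfer hg) => t t0.
by rewrite rg // /dF /dP; case: (t == s); rewrite ?(red1 pP) ?(red0 pP).
Qed.

Lemma lift_j (A : nat) : odd p ->
  (p = 3 -> ~~ (3 %| A))%N -> (p <> 3 -> ~~ (3 %| p))%N ->
  exists j, (0 < j)%N /\ ~~ (2 %| A + p * j)%N /\ ~~ (3 %| A + p * j)%N.
Proof.
move=> po h3 h3'.
have [e|ne] := (p =P 3).
  move: (h3 e) => h; rewrite e.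
  case: (boolP (odd A)) => oA; [exists 2%N | exists 1%N]; lia.
move: (h3' ne) => h.
case: (boolP (odd A)) => oA.
  case: (boolP (3 %| A + p * 2)%N) => d; [exists 4%N | exists 2%N]; lia.
case: (boolP (3 %| A + p * 1)%N) => d; [exists 3%N | exists 1%N]; lia.
Qed.

Lemma int_lift (a : 'F_p) : a != 0 ->
  exists C : nat, [/\ (1 < C)%N, coprime C (6 * p) & (C%:R : 'F_p) = a].
Proof.
move=> a0; set A := nat_of_ord a.
have A0 : (0 < A)%N by rewrite lt0n.
have Ap : (A < p)%N := ord_Fp_lt pP a.
have p1 := prime_gt1 pP.
have h3 : (p = 3 -> ~~ (3 %| A))%N by move=> e; move: Ap; rewrite e; lia.
have h3' : (p <> 3 -> ~~ (3 %| p))%N.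
  by move=> ne; rewrite dvdn_prime2 //; apply/eqP => e; apply: ne.
have [j [j0 [d2 d3]]] := lift_j p_odd h3 h3'.
exists (A + p * j)%N; split.
- lia.
- rewrite coprimeMr; apply/andP; split.
    rewrite (_ : 6 = 2 * 3)%N // coprimeMr coprimen2 coprime_sym prime_coprime //.
    by apply/andP; split => //; lia.
  rewrite coprime_sym prime_coprime // dvdn_addl ?dvdn_mulr //.
  by rewrite gtnNdvd.
- by rewrite natrD natrM (pchar_Fp_0 pP) mul0r addr0 natr_Zp.
Qed.

Lemma e_sym u v : u != 0 -> v != 0 -> e (sym u v) = theta u *: f (v / u).
Proof.
move=> u0 v0.
have -> : sym u v = act u (sym 1 (v / u)).
  by rewrite symact ?oner_neq0 ?mulf_neq0 ?invr_eq0 // mulr1 mulrC divfK.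
by rewrite e_act.
Qed.

Lemma L_sub g h : L (fun t => g t - h t) = L g - L h.
Proof.
rewrite L_add; congr (_ + _).
by rewrite -scaleN1r -L_scale; apply: L_ext => t _; rewrite mulN1r.
Qed.

Lemma L_d a s : s != 0 -> L (fun t => a * dP s t) = a *: f s.
Proof. by move=> s0; rewrite L_scale L_delta. Qed.

Lemma red_dP s x : red (dP s x) = dF s x.
Proof. by rewrite /dP /dF; case: (x == s); rewrite ?(red1 pP) ?(red0 pP). Qed.

Lemma R1 (c d t : 'F_p) : c != 0 -> d != 0 -> t != 0 ->
  NF (fun x => d ^+ 2 * dF t x - dF (d * t) x - d ^+ 2 * dF (t / c) x + dF (d * t / c) x).
Proof.
move=> c0 d0 t0.
have [C [C1 Cc hC]] := int_lift c0.
have [D [D1 Dc hD]] := int_lift d0.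
have hin : inC (cd_sym sym C D 1 t).
  exists 1%N, (fun=> 1), (fun=> C), (fun=> D), (fun=> 1), (fun=> t); split.
    by move=> i; split => //; rewrite oner_neq0.
  by rewrite big_ord1 scale1r.
have hN := N_inC hin.
rewrite /cd_sym hC hD mulr1 !eD !eN !eZ in hN.
have dt0 : d * t != 0 by rewrite mulf_neq0.
rewrite (e_sym c0 t0) (e_sym c0 dt0) scalerA in hN.
set g := fun x => (C ^ 2 * D ^ 2)%:R * dP t x - (C ^ 2)%:R * dP (d * t) x
   - ((D ^ 2)%:R * theta c) * dP (t / c) x + theta c * dP (d * t / c) x.
have tc0 : t / c != 0 by rewrite mulf_neq0 ?invr_eq0.
have dtc0 : d * t / c != 0 by rewrite mulf_neq0 ?invr_eq0.
have hg : Nset (L g) by rewrite /g L_add !L_sub !L_d.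
have c20 : c ^+ 2 != 0 by rewrite expf_neq0.
apply: (NZ_unit c20); exists g; split => // x _.
rewrite /g !(redD pP) !(redN pP) !(redM pP) !(red_natr pP) !red_dP !(red_teich pP) //.
by rewrite !natrM hC hD; ring.
Qed.
Lemma R2 (t : 'F_p) : t != 0 -> NF (fun x => dF t x + (- t) ^+ 2 * dF (1 / - t) x).
Proof.
move=> t0.
have mt0 : - t != 0 by rewrite oppr_eq0.
have it0 : 1 / - t != 0 by rewrite div1r invr_eq0.
exists (fun x => dP t x + theta (- t) * dP (1 / - t) x); split.
  rewrite L_add L_d // L_delta // -e_sym ?oner_neq0 //.
  have [_ ->] := symN (oner_neq0 _) t0.
  by rewrite eN addNr; exact: N0.
by move=> x _; rewrite (redD pP) (redM pP) !red_dP red_theta.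
Qed.

Lemma Fp_nat_neq0 n : ~~ (p %| n)%N -> (n%:R : 'F_p) != 0.
Proof.
apply: contra => /eqP h; have := congr1 (fun x : 'F_p => nat_of_ord x) h.
by rewrite /= (val_Fp_nat pP) /dvdn => ->.
Qed.

Lemma p_gt2 : (2 < p)%N.
Proof. by have := prime_gt1 pP; move: p_odd; case: (p) => [|[|[|]]]. Qed.

Lemma Fp2 : (2 : 'F_p) != 0.
Proof.
apply: Fp_nat_neq0; apply/negP => d.
have : (p <= 2)%N by apply: dvdn_leq.
have := p_gt2; lia.
Qed.

Lemma Fp4 : (4 : 'F_p) != 0.
Proof.
apply: Fp_nat_neq0; apply/negP => d.
have p4 : (p <= 4)%N by apply: dvdn_leq.
have := p_gt2; have := p_odd => po p2.
have e3 : p = 3%N by lia.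
by move: d; rewrite e3.
Qed.

Lemma Fpm1 : (-1 : 'F_p) != 0.
Proof. by rewrite oppr_eq0 oner_eq0. Qed.

Lemma Step1 : NF (dF 1).
Proof.
have h1 := R1 Fpm1 Fpm1 (oner_neq0 _).
have h2 := R2 (oner_neq0 _).
have := NZ_add (NZ_scale 2 h2) h1.
move=> /(NZ_scale 4^-1); apply: NZ_ext => x _ /=.
have e1 : 1 / - 1 = - 1 :> 'F_p by rewrite div1r invrN1.
have e2 : - 1 * 1 / - 1 = 1 :> 'F_p by rewrite mulr1 divff // Fpm1.
rewrite e1 e2 mulr1.
have := Fp4; set F := dF (-1) x; set G := dF 1 x => h4.
by field.
Qed.
Lemma Step2 d t : d != 0 -> t != 0 -> NF (fun x => d ^+ 2 * dF t x - dF (d * t) x + dF d x).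
Proof.
move=> d0 t0; have := NZ_add (R1 t0 d0 t0) (NZ_scale (d ^+ 2) Step1).
apply: NZ_ext => x _ /=; rewrite divff // mulfK //; ring.
Qed.

Lemma Step3 d t : d != 0 -> t != 0 ->
  NF (fun x => (d ^+ 2 - 1) * dF t x - (t ^+ 2 - 1) * dF d x).
Proof.
move=> d0 t0; have := NZ_add (Step2 d0 t0) (NZ_scale (-1) (Step2 t0 d0)).
apply: NZ_ext => x _ /=; rewrite (mulrC t d); ring.
Qed.

Lemma Stepm1 : NF (dF (-1)).
Proof.
have := NZ_add (R2 (oner_neq0 _)) (NZ_scale (-1) Step1).
apply: NZ_ext => x _ /=; rewrite div1r invrN1; ring.
Qed.

Hypothesis span : forall x : H, exists c : {ffun 'F_p * 'F_p -> P},
  x = \sum_(uv : 'F_p * 'F_p | (uv.1 != 0) && (uv.2 != 0)) c uv *: sym uv.1 uv.2.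

Lemma N_all : (forall s, s != 0 -> NF (dF s)) -> forall x, Nset (e x).
Proof.
move=> hs x; have [c ->] := span x.
rewrite e_sum; apply: N_sum => uv /andP [u0 v0].
rewrite eZ; apply: NZs; rewrite e_sym //; apply: NZs; apply: NZ_delta.
  by rewrite mulf_neq0 ?invr_eq0.
by apply: hs; rewrite mulf_neq0 ?invr_eq0.
Qed.

Lemma case3 : p = 3%N -> forall s : 'F_p, s != 0 -> s = 1 \/ s = -1.
Proof.
move=> e3 s s0; have h := Fp_fermat1 pP s0.
have e2 : p.-1 = 2%N by rewrite e3.
rewrite e2 in h.
have : (s - 1) * (s + 1) == 0.
  by apply/eqP; rewrite (_ : (s - 1) * (s + 1) = s ^+ 2 - 1); [rewrite h subrr | ring].
rewrite mulf_eq0 subr_eq0 addr_eq0 => /orP [] /eqP ->; [left|right] => //.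
Qed.
Variable T2 : H -> H.
Hypothesis T2L : forall (c : P) x y, T2 (c *: x + y) = c *: T2 x + T2 y.
Hypothesis T2act : forall a : 'F_p, a != 0 -> forall x, T2 (act a x) = act a (T2 x).
Hypothesis T2sym : forall u v : 'F_p, u != 0 -> v != 0 -> u + v != 0 ->
  act 2 (T2 (sym u v)) =
    sym (2 * u) v + sym (2 * u) (u + v) + sym (u + v) (2 * v) + sym u (2 * v).
Hypothesis eig : forall y : H, (exists x : H, y = e x) ->
  T2 y = (1 + 2%:R * omega_m2 (2%:R : 'F_p)) *: y.

Lemma T20 : T2 0 = 0.
Proof.
have h := T2L 1 0 0; rewrite !scale1r addr0 in h.
by apply: (@addrI _ (T2 0)); rewrite addr0 -h.
Qed.
Lemma T2D x y : T2 (x + y) = T2 x + T2 y.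
Proof. by have := T2L 1 x y; rewrite !scale1r. Qed.
Lemma T2Z c x : T2 (c *: x) = c *: T2 x.
Proof. by rewrite -[c *: x]addr0 T2L T20 addr0. Qed.

Lemma e_T2 x : T2 (e x) = e (T2 x).
Proof.
rewrite /e_om2 T2Z; congr (_ *: _).
rewrite (big_morph T2 T2D T20); apply: eq_bigr => a a0.
by rewrite T2Z T2act.
Qed.

Lemma Fp3 : p <> 3%N -> (3 : 'F_p) != 0.
Proof.
move=> ne; apply: Fp_nat_neq0; apply/negP => d.
have : (p <= 3)%N by apply: dvdn_leq.
have := p_gt2; lia.
Qed.

Lemma T2rel : p <> 3%N ->
  NF (fun x => 6 * dF 2 x - 4 * dF 1 x - 4 * dF (3 / 2) x - 9 * dF (4 / 3) x - dF 4 x).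
Proof.
move=> ne.
have h2 := Fp2; have h3 := Fp3 ne.
have e12 : (1 + 2 : 'F_p) = 3 by ring.
have n12 : (1 + 2 : 'F_p) != 0 by rewrite e12.
have n21 : (2 * 1 : 'F_p) != 0 by rewrite mulr1.
have n22 : (2 * 2 : 'F_p) != 0 by rewrite mulf_neq0.
have nq x y : x != 0 -> y != 0 -> (x / y : 'F_p) != 0.
  by move=> x0 y0; rewrite mulf_neq0 ?invr_eq0.
have i20 : (2^-1 : 'F_p) != 0 by rewrite invr_eq0.
set lam := (1 + 2%:R * omega_m2 (2%:R : 'F_p)).
pose g x := theta 2 * lam * dP 2 x - theta (2 * 1) * dP (2 / (2 * 1)) x
  - theta (2 * 1) * dP ((1 + 2) / (2 * 1)) x - theta (1 + 2) * dP ((2 * 2) / (1 + 2)) x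
  - theta 1 * dP ((2 * 2) / 1) x.
have hg : Nset (L g).
  rewrite /g !L_sub !L_d ?nq ?oner_neq0 //.
  rewrite -!e_sym ?oner_neq0 //.
  rewrite -scalerA -eig; last by exists (sym 1 2).
  rewrite e_T2 -e_act // T2sym ?oner_neq0 // !eD.
  by rewrite cancel4; exact: N0.
exists g; split => // x _.
have p1 : 2 / (2 * 1) = 1 :> 'F_p by rewrite mulr1 divff.
have p2 : (1 + 2) / (2 * 1) = 3 / 2 :> 'F_p by rewrite mulr1 e12.
have p3 : 2 * 2 / (1 + 2) = 4 / 3 :> 'F_p by rewrite e12; congr (_ / _); ring.
have p4 : 2 * 2 / 1 = 4 :> 'F_p by rewrite divr1; ring.
rewrite /g /lam /omega_m2 !(redD pP) !(redN pP) !(redM pP) !red_dP.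
rewrite !(red_teich pP) ?oner_neq0 // (redD pP) (red1 pP) (redM pP) (redX pP) (red_teich pP) // (red_natr pP) p1 p2 p3 p4.
by field.
Qed.
Lemma all_delta s : s != 0 -> NF (dF s).
Proof.
move=> s0; case: (p =P 3%N) => e3.
  by case: (case3 e3 s0) => ->; [exact: Step1 | exact: Stepm1].
have h2 := Fp2; have h3 := Fp3 e3.
have T := T2rel e3.
have nq x y : x != 0 -> y != 0 -> (x / y : 'F_p) != 0.
  by move=> x0 y0; rewrite mulf_neq0 ?invr_eq0.
have h4 : (4 : 'F_p) != 0 := Fp4.
have S3a := Step3 h2 (nq _ _ h3 h2).
have S3b := Step3 h2 (nq _ _ h4 h3).
have S3c := Step3 h2 h4.
have comb := NZ_add (NZ_add (NZ_add (NZ_add (NZ_scale 3 T) (NZ_scale 12 Step1))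
   (NZ_scale 4 S3a)) (NZ_scale 9 S3b)) S3c.
have n9 : (-9 : 'F_p) != 0.
  rewrite (_ : (-9 : 'F_p) = - (3 * 3)); last by ring.
  by rewrite oppr_eq0 mulf_neq0.
have d2 : NF (dF 2).
  apply: (NZ_unit n9); move: comb; apply: NZ_ext => x _ /=; field; by rewrite h3 h2.
have := NZ_add (Step3 h2 s0) (NZ_scale (s ^+ 2 - 1) d2).
have n3 : (2 ^+ 2 - 1 : 'F_p) != 0.
  by rewrite (_ : (2 ^+ 2 - 1 : 'F_p) = 3) //; ring.
move=> h; apply: (NZ_unit n3); move: h; apply: NZ_ext => x _ /=; ring.
Qed.

Lemma p2_sym u v : u != 0 -> v != 0 -> inC ((p%:R ^+ 2 : P) *: sym u v).
Proof.
move=> u0 v0.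
pose k := if (p %% 3 == 1)%N then 4%N else 2%N.
have p1 := prime_gt1 pP.
have kk : (k = 4 \/ k = 2)%N by rewrite /k; case: ifP; [left | right].
pose C := (1 + p * k)%N.
have C1 : (1 < C)%N by rewrite /C; case: kk => ->; lia.
have Cc : coprime C (6 * p).
  rewrite coprimeMr; apply/andP; split.
    rewrite (_ : 6 = 2 * 3)%N // coprimeMr coprimen2 coprime_sym prime_coprime //.
    apply/andP; split; rewrite /C /k; case: ifP => h; move: p_odd h; lia.
  rewrite coprime_sym prime_coprime // /C dvdn_addl ?dvdn_mulr //.
  by rewrite gtnNdvd.
have CF : (C%:R : 'F_p) = 1.
  by rewrite /C natrD natrM (pchar_Fp_0 pP) mul0r addr0.
have hin : inC (cd_sym sym C C u v).
  exists 1%N, (fun=> 1), (fun=> C), (fun=> C), (fun=> u), (fun=> v); split.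
    by move=> i; split => //; rewrite u0 v0.
  by rewrite big_ord1 scale1r.
pose m := (k * (2 + p * k))%N.
have Cm : (C ^ 2 = 1 + p * m)%N by rewrite /C /m; case: kk => ->; nia.
have rm : red (m%:R : P) != 0.
  rewrite (red_natr pP); apply: Fp_nat_neq0; rewrite /m Euclid_dvdM //.
  rewrite dvdn_addl ?dvdn_mulr // negb_or.
  have n2 : ~~ (p %| 2)%N.
    apply/negP => d; have : (p <= 2)%N by apply: dvdn_leq.
    lia.
  rewrite n2 andbT; case: kk => -> //.
  apply/negP => d; have : (p <= 4)%N by apply: dvdn_leq.
  move=> le4; have e3 : p = 3%N by move: p_odd; lia.
  by move: d; rewrite e3.
have [w hw] : exists w : P, w * (m%:R ^+ 2) = 1.
  by apply: (punit pP); rewrite (redX pP) expf_neq0.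
have E : cd_sym sym C C u v = (p%:R * m%:R) ^+ 2 *: sym u v.
  rewrite /cd_sym CF !mul1r -!scalerBl -[X in _ + X]scale1r -scalerDl.
  congr (_ *: _).
  have -> : (C ^ 2 * C ^ 2)%:R = ((C ^ 2)%:R : P) * (C ^ 2)%:R by rewrite natrM.
  rewrite Cm natrD natrM; ring.
have -> : (p%:R ^+ 2 : P) *: sym u v = w *: cd_sym sym C C u v.
  by rewrite E scalerA exprMn mulrCA hw mulr1.
exact: inCZ.
Qed.

Lemma p2_all x : inC ((p%:R ^+ 2 : P) *: x).
Proof.
have [c ->] := span x; rewrite scaler_sumr; apply: inC_sum => uv /andP [u0 v0].
by rewrite scalerA mulrC -scalerA; apply: inCZ; apply: p2_sym.
Qed.

Lemma main_dir x : exists x', inC x' /\ e x = e x'.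
Proof.
have hN := N_all all_delta.
have [c0 [y0 [h0 E0]]] := hN x.
have [c1 [y1 [h1 E1]]] := hN y0.
exists (c0 + p%:R *: c1 + p%:R ^+ 2 *: y1); split.
  by apply: inCD; [apply: inCD => //; exact: inCZ | exact: p2_all].
by rewrite E0 E1 !eD !eZ scalerDr scalerA -expr2 addrA.
Qed.
End Main.

Unset Implicit Arguments.

Theorem proposition2p25 (p : nat) (p_prime : prime p) (p_odd : odd p)
  (H : lmodType (padic p)) (act : 'F_p -> H -> H) (sym : 'F_p -> 'F_p -> H)
  (T2 : H -> H) :
  cusp_modsym act sym ->
  T2_operator act sym T2 ->
  (forall y : H, (exists x : H, y = e_om2 act x) ->
     T2 y = (1 + 2%:R * omega_m2 (2%:R : 'F_p)) *: y) ->
  forall y : H,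
    (exists x : H, y = e_om2 act x) <->
    (exists x : H, in_C sym x /\ y = e_om2 act x).
Proof.
move=> hM hT hE y; split; last by move=> [x [_ ->]]; exists x.
move=> [x ->].
case: hM => actL [_ [actM [_ [span [symN [_ symact]]]]]].
case: hT => T2L T2act T2sym.
have [x' [hx' ->]] := @main_dir p p_prime p_odd H act sym actL actM symN symact span
  T2 T2L T2act T2sym hE x.
by exists x'.
Qed.
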